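(* For $i=1,\dots,n$ let $X_i=\{0,\dots,m_i-1\}$ and let $P_i$ be an irreducible stochastic matrix on $X_i$ in detailed balance with a strictly positive probability measure $\sigma_i$, where $\sigma_i$ is uniform for every $i\ge2$. Let $p^0_1,\dots,p^0_n>0$ sum to $1$ and $P=\sum_{i=1}^np^0_i(I_1\otimes\cdots\otimes I_{i-1}\otimes P_i\otimes J_{i+1}\otimes\cdots\otimes J_n)$. For each $i$ let $U_i$ be real, $\Delta_i$ real diagonal and $D_i=\mathrm{diag}(\sigma_i(0),\dots,\sigma_i(m_i-1))$ with $P_iU_i=U_i\Delta_i$, $U_i^TD_iU_i=I$, the column of $U_i$ indexed by $0$ equal to the all-ones vector and $(\Delta_i)_{00}=1$. Set $$U=U_1\otimes A_2\otimes\cdots\otimes A_n+\sum_{k=2}^nI_1^{\sigma_1\text{-norm}}\otimes\cdots\otimes I_{k-1}^{\sigma_{k-1}\text{-norm}}\otimes(U_k-A_k)\otimes A_{k+1}\otimes\cdots\otimes A_n,$$ $$D=\bigotimes_{i=1}^nD_i,\qquad \Delta=\sum_{i=1}^np^0_i(I_1\otimes\cdots\otimes I_{i-1}\otimes\Delta_i\otimes J^{\mathrm{diag}}_{i+1}\otimes\cdots\otimes J^{\mathrm{diag}}_n).$$ Then $PU=U\Delta$ and $U^TDU=I$.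
   Context: $I_i$ is the $m_i\times m_i$ identity, $J_i$ the $m_i\times m_i$ matrix with all entries $1/m_i$, $I_i^{\sigma_i\text{-norm}}=\mathrm{diag}(\sigma_i(0)^{-1/2},\dots,\sigma_i(m_i-1)^{-1/2})$, $A_i$ the $m_i\times m_i$ matrix whose column $0$ consists of ones and all other entries are $0$, and $J^{\mathrm{diag}}_i=\mathrm{diag}(1,0,\dots,0)$. Kronecker products are indexed lexicographically: $(A\otimes B)_{(x,x'),(y,y')}=A_{x,y}B_{x',y'}$. *)

(* Defs.v *)
From HB Require Import structures.
From mathcomp Require Import all_boot all_order all_algebra.
From mathcomp Require Import reals.
Set Implicit Arguments. Unset Strict Implicit. Unset Printing Implicit Defensive.
Import Order.TTheory GRing.Theory Num.Theory.
Local Open Scope ring_scope.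

(* Index set X_1 x ... x X_n, factors indexed 0-based by 'I_n, X_i = 'I_(m i). *)
Definition prodIdx (n : nat) (m : 'I_n -> nat) : finType :=
  {dffun forall i : 'I_n, 'I_(m i)}.

Section Defs.
Variables (R : realType) (n : nat) (m : 'I_n -> nat).
Local Notation X := (prodIdx m).

Definition mulX (A B : X -> X -> R) : X -> X -> R :=
  fun x z => \sum_(y : X) A x y * B y z.
Definition trX (A : X -> X -> R) : X -> X -> R := fun x y => A y x.
Definition idX : X -> X -> R := fun x y => (x == y)%:R.

(* Entry (x,y) of the Kronecker product
   B_0 (x) ... (x) B_(i-1) (x) M (x) C_(i+1) (x) ... (x) C_(n-1). *)
Definition kron_at (i : 'I_n) (B : forall j : 'I_n, 'M[R]_(m j))
  (M : 'M[R]_(m i)) (C : forall j : 'I_n, 'M[R]_(m j)) : X -> X -> R :=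
  fun x y => (\prod_(j : 'I_n | (j < i)%N) B j (x j) (y j)) * M (x i) (y i)
             * \prod_(j : 'I_n | (i < j)%N) C j (x j) (y j).

Definition kron (F : forall j : 'I_n, 'M[R]_(m j)) : X -> X -> R :=
  fun x y => \prod_(j : 'I_n) F j (x j) (y j).
Arguments kron_at i B M C : clear implicits.

Definition Imx (j : 'I_n) : 'M[R]_(m j) := 1%:M.
Definition Jmx (j : 'I_n) : 'M[R]_(m j) := const_mx (m j)%:R^-1.
Definition Amx (j : 'I_n) : 'M[R]_(m j) :=
  \matrix_(x, y) (nat_of_ord y == 0%N)%:R.
Definition Jdiag (j : 'I_n) : 'M[R]_(m j) :=
  \matrix_(x, y) ((nat_of_ord x == 0%N) && (nat_of_ord y == 0%N))%:R.
Definition Inorm (sigma : forall j : 'I_n, 'I_(m j) -> R) (j : 'I_n)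
  : 'M[R]_(m j) := \matrix_(x, y) ((x == y)%:R * (Num.sqrt (sigma j x))^-1).
Definition Dmx (sigma : forall j : 'I_n, 'I_(m j) -> R) (j : 'I_n)
  : 'M[R]_(m j) := \matrix_(x, y) ((x == y)%:R * sigma j x).

Definition stochastic k (Q : 'M[R]_k) : Prop :=
  (forall x y, 0 <= Q x y) /\ (forall x, \sum_y Q x y = 1).
Definition mxpow k (Q : 'M[R]_k) (t : nat) : 'M[R]_k := iter t (mulmx Q) 1%:M.
Definition irreducible k (Q : 'M[R]_k) : Prop :=
  forall x y, exists t, 0 < mxpow Q t x y.
Definition detailed_balance k (Q : 'M[R]_k) (s : 'I_k -> R) : Prop :=
  forall x y, s x * Q x y = s y * Q y x.

Definition Pbig (p : 'I_n -> R) (P : forall j : 'I_n, 'M[R]_(m j)) : X -> X -> R :=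
  fun x y => \sum_(i : 'I_n) p i * kron_at i Imx (P i) Jmx x y.

(* U = U_1 (x) A_2 .. (x) A_n
       + sum_(k>=2) Inorm_1 (x) .. (x) Inorm_(k-1) (x) (U_k - A_k) (x) A_(k+1) .. A_n
   (0-based: the term k = 0 has no Inorm factors and uses U_0 itself). *)
Definition Ubig (sigma : forall j : 'I_n, 'I_(m j) -> R)
  (U : forall j : 'I_n, 'M[R]_(m j)) : X -> X -> R :=
  fun x y => \sum_(k : 'I_n)
    kron_at k (Inorm sigma) (if nat_of_ord k == 0%N then U k else U k - Amx k) Amx x y.

Definition Dbig (sigma : forall j : 'I_n, 'I_(m j) -> R) : X -> X -> R :=
  kron (Dmx sigma).

Definition Deltabig (p : 'I_n -> R) (Delta : forall j : 'I_n, 'M[R]_(m j))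
  : X -> X -> R :=
  fun x y => \sum_(i : 'I_n) p i * kron_at i Imx (Delta i) Jdiag x y.

End Defs.

Arguments mulX {R n m} A B x z.
Arguments trX {R n m} A x y.
Arguments idX {R n m} x y.
Arguments Pbig {R n m} p P x y.
Arguments Ubig {R n m} sigma U x y.
Arguments Dbig {R n m} sigma x y.
Arguments Deltabig {R n m} p Delta x y.
Arguments Dmx {R n m} sigma j.

(* Main.v *)
Require Import Defs.
From HB Require Import structures.
From mathcomp Require Import all_boot all_order all_algebra.
From mathcomp Require Import reals zify ring.
Import Order.TTheory GRing.Theory Num.Theory.
Local Open Scope ring_scope.

Lemma etagged_app (I : finType) (T : I -> finType) (R : Type) (F : forall j, T j -> R)
  (u : {j : I & T j}) j (e : tag u = j) : F j (etagged e) = F (tag u) (tagged u).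
Proof. by case: j / e. Qed.

Lemma sum_prod (R : realType) (n : nat) (m : 'I_n -> nat)
  (F : forall j : 'I_n, 'I_(m j) -> R) :
  \sum_(z : prodIdx m) \prod_j F j (z j) = \prod_j \sum_(a : 'I_(m j)) F j a.
Proof.
pose T : 'I_n -> finType := fun j => 'I_(m j).
transitivity (\prod_j \sum_(u : {j : 'I_n & 'I_(m j)} | u \in tagged_with T j)
     F (tag u) (tagged u)); last first.
  apply: eq_bigr => i _.
  transitivity (\sum_(k | k == i) \sum_(a : 'I_(m k)) F k a); last by rewrite big_pred1_eq.
  rewrite (sig_big_dep (fun k => k == i) (fun k (a : 'I_(m k)) => true) F).
  by apply: eq_bigl => u; rewrite andbT.
rewrite bigA_distr_big_dep [RHS]big_sub.
rewrite [RHS](reindex (@to_family_tagged_with _ T)); last first.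
  by exists of_family_tagged_with => x _; [apply: to_family_tagged_withK|apply: of_family_tagged_withK].
rewrite [LHS](reindex (@dffun_of_fprod _ T)); last first.
  by exists (@fprod_of_dffun _ T) => x _; [apply: dffun_of_fprodK|apply: fprod_of_dffunK].
apply: eq_bigr => f _; apply: eq_bigr => j _ /=.
rewrite ffunE /fun_of_fprod.
match goal with |- context[@etagged _ _ _ _ ?e] => move: e end.
move: (fprod_fun f j) => u e.
by case: j / e.
Qed.

Section Helpers.
Variables (R : realType) (n : nat) (m : 'I_n -> nat).
Local Notation X := (prodIdx m).

Definition sel (i : 'I_n) (B F C : forall j : 'I_n, 'M[R]_(m j)) (j : 'I_n)
  : 'M[R]_(m j) := if (j < i)%N then B j else if (i < j)%N then C j else F j.

Lemma kron_atE i (B F C : forall j : 'I_n, 'M[R]_(m j)) (x y : X) :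
  @kron_at R n m i B (F i) C x y = \prod_j sel i B F C j (x j) (y j).
Proof.
rewrite /kron_at [RHS](bigD1 i) //= /sel ltnn.
rewrite [in RHS](bigID (fun j : 'I_n => (j < i)%N)) /=.
rewrite [RHS]mulrA [in RHS](mulrC (F i _ _)); congr (_ * _ * _).
- apply: eq_big => [j|j ->] //.
  by rewrite -val_eqE /=; lia.
- apply: eq_big => [j|j hj].
    by rewrite -val_eqE /=; lia.
  have -> : (j < i)%N = false by lia.
  by rewrite hj.
Qed.

Lemma mulX_sums (I K : finType) (a : I -> R) (b : K -> R)
  (A : I -> forall j : 'I_n, 'M[R]_(m j)) (B : K -> forall j : 'I_n, 'M[R]_(m j))
  (f g : X -> X -> R) :
  (forall x z, f x z = \sum_i a i * \prod_j A i j (x j) (z j)) ->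
  (forall z y, g z y = \sum_k b k * \prod_j B k j (z j) (y j)) ->
  forall x y, mulX f g x y
    = \sum_i \sum_k (a i * b k) * \prod_j (A i j *m B k j) (x j) (y j).
Proof.
move=> hf hg x y; rewrite /mulX.
under eq_bigr => z _ do rewrite hf hg big_distrl /=.
rewrite exchange_big; apply: eq_bigr => i _.
under eq_bigr => z _ do rewrite big_distrr /=.
rewrite exchange_big; apply: eq_bigr => k _.
transitivity (a i * b k * \sum_(z : X) \prod_j (A i j (x j) (z j) * B k j (z j) (y j))).
  by rewrite mulr_sumr; apply: eq_bigr => z _; rewrite big_split /= mulrACA.
congr (_ * _).
rewrite (@sum_prod R n m (fun j a => A i j (x j) a * B k j a (y j))); apply: eq_bigr => j _; rewrite !mxE.
by [].
Qed.


Lemma sum_e0 k (f : 'I_k -> R) (k0 : (0 < k)%N) :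
  \sum_c ((nat_of_ord c == 0%N)%:R * f c) = f (Ordinal k0).
Proof.
rewrite (bigD1 (Ordinal k0)) //= mul1r big1 ?addr0 // => c hc.
suff -> : (nat_of_ord c == 0%N) = false by rewrite mul0r.
by apply/negbTE; apply: contra hc => /eqP h; apply/eqP/val_inj.
Qed.

Lemma sum_delta k (f : 'I_k -> R) a :
  \sum_c ((c == a)%:R * f c) = f a.
Proof.
rewrite (bigD1 a) //= eqxx mul1r big1 ?addr0 // => c hc.
by rewrite (negbTE hc) mul0r.
Qed.

Lemma TD (sigma : forall j : 'I_n, 'I_(m j) -> R) j (M N : 'M[R]_(m j)) a b :
  (M^T *m Dmx sigma j *m N) a b = \sum_c M c a * sigma j c * N c b.
Proof.
rewrite mxE; apply: eq_bigr => c _; rewrite mxE; congr (_ * _).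
under eq_bigr => d _ do rewrite !mxE mulrCA.
by rewrite sum_delta.
Qed.


Lemma SU (sigma : forall j : 'I_n, 'I_(m j) -> R) (U : forall j : 'I_n, 'M[R]_(m j)) j
  (hU : (U j)^T *m Dmx sigma j *m U j = 1%:M)
  (h1 : forall x y, nat_of_ord y = 0%N -> U j x y = 1) b :
  \sum_c sigma j c * U j c b = (nat_of_ord b == 0%N)%:R.
Proof.
have k0 : (0 < m j)%N by apply: leq_ltn_trans (ltn_ord b).
have := congr1 (fun M : 'M[R]_(m j) => M (Ordinal k0) b) hU; rewrite TD mxE /= => h.
have -> : (nat_of_ord b == 0%N) = (Ordinal k0 == b) by rewrite -val_eqE /= eq_sym.
rewrite -h; apply: eq_bigr => c _. by rewrite (h1 c (Ordinal k0)) ?mul1r.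
Qed.

Lemma UTDU (sigma : forall j : 'I_n, 'I_(m j) -> R) (U : forall j : 'I_n, 'M[R]_(m j)) j
  (hU : (U j)^T *m Dmx sigma j *m U j = 1%:M) a b :
  \sum_c U j c a * sigma j c * U j c b = (a == b)%:R.
Proof. by have := congr1 (fun M : 'M[R]_(m j) => M a b) hU; rewrite TD mxE /= => ->. Qed.


Lemma selE_lt (i : 'I_n) (B F C : forall j : 'I_n, 'M[R]_(m j)) (j : 'I_n) : (j < i)%N -> sel i B F C j = B j.
Proof. by rewrite /sel => ->. Qed.
Lemma selE_gt (i : 'I_n) (B F C : forall j : 'I_n, 'M[R]_(m j)) (j : 'I_n) : (i < j)%N -> sel i B F C j = C j.
Proof. by rewrite /sel => h; rewrite ltnNge (ltnW h) /= h. Qed.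
Lemma selE_eq (i : 'I_n) (B F C : forall j : 'I_n, 'M[R]_(m j)) : sel i B F C i = F i.
Proof. by rewrite /sel ltnn. Qed.

Lemma sumc_const k (k0 : (0 < k)%N) (v : R) :
  \sum_(c < k) (k%:R^-1 * v) = v.
Proof.
rewrite sumr_const card_ord -mulrnAl -(mulr_natr (k%:R^-1)) mulVf ?mul1r //.
by rewrite pnatr_eq0 -lt0n.
Qed.

Lemma JA j (k0 : (0 < m j)%N) : Jmx R m j *m Amx R m j = Amx R m j *m Jdiag R m j.
Proof.
apply/matrixP => a b; rewrite !mxE.
under eq_bigr => c _ do rewrite !mxE.
under [RHS]eq_bigr => c _ do rewrite !mxE.
by rewrite sumc_const // (@sum_e0 _ (fun c => ((nat_of_ord c == 0%N) && (nat_of_ord b == 0%N))%:R) k0).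
Qed.



Lemma PA j (P D : 'M[R]_(m j)) (hs : stochastic P) (hd : is_diag_mx D)
  (h0 : forall y, nat_of_ord y = 0%N -> D y y = 1) :
  P *m Amx R m j = Amx R m j *m D.
Proof.
apply/matrixP => a b; rewrite !mxE.
have k0 : (0 < m j)%N by apply: leq_ltn_trans (ltn_ord a).
under eq_bigr => c _ do rewrite !mxE.
under [RHS]eq_bigr => c _ do rewrite !mxE.
rewrite -mulr_suml hs.2 mul1r (@sum_e0 _ (fun c => D c b) k0).
case: eqP => hb.
  have -> : b = Ordinal k0 by apply: val_inj.
  by rewrite h0.
by rewrite (is_diag_mxP hd) //=; apply/eqP => h; apply: hb; rewrite -h.
Qed.

Lemma JV (sigma : forall j : 'I_n, 'I_(m j) -> R) (U : forall j : 'I_n, 'M[R]_(m j)) j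
  (hunif : forall x, sigma j x = (m j)%:R^-1)
  (hU : (U j)^T *m Dmx sigma j *m U j = 1%:M)
  (h1 : forall x y, nat_of_ord y = 0%N -> U j x y = 1) a b :
  (Jmx R m j *m (U j - Amx R m j)) a b = 0.
Proof.
have k0 : (0 < m j)%N by apply: leq_ltn_trans (ltn_ord a).
rewrite mxE.
under eq_bigr => c _ do rewrite !mxE mulrBr.
rewrite sumrB sumc_const //.
transitivity (\sum_c sigma j c * U j c b - (nat_of_ord b == 0%N)%:R).
  by congr (_ - _); apply: eq_bigr => c _; rewrite hunif.
by rewrite (SU _ _ _ hU h1) subrr.
Qed.

Lemma VJd (U : forall j : 'I_n, 'M[R]_(m j)) j
  (h1 : forall x y, nat_of_ord y = 0%N -> U j x y = 1) a b :
  ((U j - Amx R m j) *m Jdiag R m j) a b = 0.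
Proof.
rewrite mxE big1 // => c _; rewrite !mxE.
case: eqP => hc /=; last by rewrite mulr0.
by rewrite h1 // subrr mul0r.
Qed.


Section Fac.
Variables (sigma : forall j : 'I_n, 'I_(m j) -> R) (U : forall j : 'I_n, 'M[R]_(m j)) (j : 'I_n).
Local Notation A := (Amx R m j).
Local Notation D := (Dmx sigma j).
Local Notation e0 a := ((nat_of_ord a == 0%N)%:R : R).

Lemma N1 (hpos : forall x, 0 < sigma j x) a b :
  ((Inorm sigma j)^T *m D *m Inorm sigma j) a b = (a == b)%:R.
Proof.
rewrite TD (bigD1 a) //= big1 => [|c hc]; last by rewrite !mxE (negbTE hc) !mul0r.
rewrite !mxE eqxx addr0 mul1r.
have hs : 0 < Num.sqrt (sigma j a) by rewrite sqrtr_gt0.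
have e : sigma j a = Num.sqrt (sigma j a) * Num.sqrt (sigma j a).
  by rewrite -expr2 sqr_sqrtr // ltW.
rewrite [X in _ * X * _]e; set s := Num.sqrt _.
have s0 : s != 0 by rewrite gt_eqF.
field; exact: s0.
Qed.

Lemma N4 (hsum : \sum_x sigma j x = 1) a b :
  (A^T *m D *m A) a b = e0 a * e0 b.
Proof.
rewrite TD; under eq_bigr => c _ do rewrite !mxE.
rewrite -[RHS]mulr1 -hsum mulr_sumr; apply: eq_bigr => c _; ring.
Qed.

Hypotheses (hU : (U j)^T *m D *m U j = 1%:M)
  (h1 : forall x y, nat_of_ord y = 0%N -> U j x y = 1)
  (hsum : \sum_x sigma j x = 1).

Lemma N5 a b : (A^T *m D *m (U j - A)) a b = 0.
Proof.
rewrite TD; under eq_bigr => c _ do rewrite !mxE.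
transitivity (\sum_c (e0 a * (sigma j c * U j c b) - e0 a * e0 b * sigma j c)).
  by apply: eq_bigr => c _; ring.
rewrite sumrB -!mulr_sumr hsum (SU _ _ _ hU h1); ring.
Qed.

Lemma N6 a b : ((U j - A)^T *m D *m A) a b = 0.
Proof.
rewrite TD; under eq_bigr => c _ do rewrite !mxE.
transitivity (\sum_c (e0 b * (sigma j c * U j c a) - e0 a * e0 b * sigma j c)).
  by apply: eq_bigr => c _; ring.
rewrite sumrB -!mulr_sumr hsum (SU _ _ _ hU h1); ring.
Qed.

Lemma N3 a b : ((U j - A)^T *m D *m (U j - A)) a b = (a == b)%:R - e0 a * e0 b.
Proof.
rewrite TD; under eq_bigr => c _ do rewrite !mxE.
transitivity (\sum_c (U j c a * sigma j c * U j c b - e0 b * (sigma j c * U j c a)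
   - e0 a * (sigma j c * U j c b) + e0 a * e0 b * sigma j c)).
  by apply: eq_bigr => c _; ring.
rewrite big_split !sumrB /= -!mulr_sumr hsum !(SU _ _ _ hU h1) (UTDU _ _ _ hU); ring.
Qed.

End Fac.

End Helpers.

Arguments sel {R n m} i B F C j.
Arguments mulX_sums {R n m I K a b A B f g}.
Arguments selE_lt {R n m i B F C j}.
Arguments selE_gt {R n m i B F C j}.
Arguments selE_eq {R n m i B F C}.
Arguments kron_atE {R n m} i {B} F {C x y}.
Arguments PA {R n m j P D}.
Arguments JV {R n m sigma U j}.
Arguments VJd {R n m U j}.
Arguments JA {R n m j}.
Arguments N1 {R n m sigma j} hpos a b.
Arguments N4 {R n m sigma j} hsum a b.
Arguments N3 {R n m sigma U j} hU h1 hsum a b.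
Arguments N5 {R n m sigma U j} hU h1 hsum a b.
Arguments N6 {R n m sigma U j} hU h1 hsum a b.

Theorem corollary6p2 (R : realType) (n : nat) (m : 'I_n -> nat)
    (P : forall i : 'I_n, 'M[R]_(m i)) (sigma : forall i : 'I_n, 'I_(m i) -> R)
    (p : 'I_n -> R) (U Delta : forall i : 'I_n, 'M[R]_(m i)) :
  (forall i, stochastic (P i)) ->
  (forall i, irreducible (P i)) ->
  (forall i, detailed_balance (P i) (sigma i)) ->
  (forall i x, 0 < sigma i x) ->
  (forall i, \sum_x sigma i x = 1) ->
  (forall (i : 'I_n), (0 < i)%N -> forall x, sigma i x = (m i)%:R^-1) ->
  (forall i, 0 < p i) ->
  \sum_i p i = 1 ->
  (forall i, is_diag_mx (Delta i)) ->
  (forall i, P i *m U i = U i *m Delta i) ->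
  (forall i, (U i)^T *m Dmx sigma i *m U i = 1%:M) ->
  (forall i x y, nat_of_ord y = 0%N -> U i x y = 1) ->
  (forall i y, nat_of_ord y = 0%N -> Delta i y y = 1) ->
  (forall x y, mulX (Pbig p P) (Ubig sigma U) x y
               = mulX (Ubig sigma U) (Deltabig p Delta) x y) /\
  (forall x y, mulX (mulX (trX (Ubig sigma U)) (Dbig sigma)) (Ubig sigma U) x y
               = idX x y).
Proof.
move=> hst _ _ hpos hsum hunif _ hp hdiag hPU hU h1 hD1.
pose V := fun j : 'I_n => if nat_of_ord j == 0%N then U j else U j - Amx R m j.
have HP : forall x y, Pbig p P x y
    = \sum_i p i * \prod_j sel i (Imx R m) P (Jmx R m) j (x j) (y j).
  by move=> x y; rewrite /Pbig; apply: eq_bigr => i _; rewrite (kron_atE i P).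
have HU : forall x y, Ubig sigma U x y
    = \sum_k 1 * \prod_j sel k (Inorm sigma) V (Amx R m) j (x j) (y j).
  by move=> x y; rewrite /Ubig; apply: eq_bigr => k _; rewrite mul1r (kron_atE k V).
have HD : forall x y, Deltabig p Delta x y
    = \sum_i p i * \prod_j sel i (Imx R m) Delta (Jdiag R m) j (x j) (y j).
  by move=> x y; rewrite /Deltabig; apply: eq_bigr => i _; rewrite (kron_atE i Delta).
have PV : forall j, P j *m V j = V j *m Delta j.
  move=> j; rewrite /V; case: eqP => _; first exact: hPU.
  by rewrite mulmxBr mulmxBl hPU (PA (hst j) (hdiag j) (hD1 j)).
split.
  move=> x y; rewrite (mulX_sums HP HU) (mulX_sums HU HD) [RHS]exchange_big.
  apply: eq_bigr => i _; apply: eq_bigr => k _; rewrite mulr1 mul1r; congr (_ * _).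
  case: (ltnP i k) => hik.
    have hk0 : (nat_of_ord k == 0%N) = false by apply/negbTE; rewrite -lt0n (leq_ltn_trans _ hik).
    rewrite (bigD1 k) //= [RHS](bigD1 k) //= (selE_gt hik) (selE_gt hik) !selE_eq /V hk0.
    by rewrite (JV (hunif k (leq_ltn_trans (leq0n i) hik)) (hU k) (h1 k)) mul0r (VJd (h1 k)) mul0r.
  apply: eq_bigr => j _.
  have k0 : (0 < m j)%N by apply: leq_ltn_trans (ltn_ord (x j)).
  case: (ltngtP j k) => hjk.
  - have hji : (j < i)%N by apply: leq_trans hik.
    by rewrite !(selE_lt hji) !(selE_lt hjk) /Imx mul1mx mulmx1.
  - rewrite !(selE_gt hjk).
    case: (ltngtP j i) => hji.
    + by rewrite !(selE_lt hji) /Imx mul1mx mulmx1.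
    + by rewrite !(selE_gt hji) JA.
    + have E : j = i by apply: val_inj.
      subst j; rewrite !selE_eq.
      by rewrite (PA (hst i) (hdiag i) (hD1 i)).
  - have E : j = k by apply: val_inj.
    subst j; rewrite selE_eq.
    case: (ltngtP k i) => hki.
    + by rewrite !(selE_lt hki) /Imx mul1mx mulmx1.
    + by move: hik; rewrite leqNgt hki.
    + have E : k = i by apply: val_inj.
      by subst k; rewrite !selE_eq PV.
have HT : forall x y, trX (Ubig sigma U) x y
    = \sum_k 1 * \prod_j (sel k (Inorm sigma) V (Amx R m) j)^T (x j) (y j).
  move=> x y; rewrite /trX HU; apply: eq_bigr => k _; congr (_ * _).
  by apply: eq_bigr => j _; rewrite mxE.
have HDb : forall x y, Dbig sigma x y
    = \sum_(u < 1) 1 * \prod_j Dmx sigma j (x j) (y j).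
  by move=> x y; rewrite big_ord1 mul1r.
have HTD : forall x y, mulX (trX (Ubig sigma U)) (Dbig sigma) x y
    = \sum_k 1 * \prod_j ((sel k (Inorm sigma) V (Amx R m) j)^T *m Dmx sigma j) (x j) (y j).
  move=> x y; rewrite (mulX_sums HT HDb); apply: eq_bigr => k _.
  by rewrite big_ord1 mulr1.
move=> x y; rewrite (mulX_sums HTD HU).
pose W k k' j := ((sel k (Inorm sigma) V (Amx R m) j)^T *m Dmx sigma j
    *m sel k' (Inorm sigma) V (Amx R m) j).
transitivity (\sum_k \sum_k' \prod_j W k k' j (x j) (y j)).
  by apply: eq_bigr => k _; apply: eq_bigr => k' _; rewrite !mul1r.
have W0 : forall k k' : 'I_n, k != k' -> \prod_j W k k' j (x j) (y j) = 0.
  move=> k k' hne; case: (ltngtP k k') => h.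
  - have hk0 : (nat_of_ord k' == 0%N) = false by apply/negbTE; rewrite -lt0n (leq_ltn_trans _ h).
    rewrite (bigD1 k') //= /W (selE_gt h) selE_eq /V hk0.
    by rewrite (N5 (hU k') (h1 k') (hsum k')) mul0r.
  - have hk0 : (nat_of_ord k == 0%N) = false by apply/negbTE; rewrite -lt0n (leq_ltn_trans _ h).
    rewrite (bigD1 k) //= /W (selE_gt h) selE_eq /V hk0.
    by rewrite (N6 (hU k) (h1 k) (hsum k)) mul0r.
  - have E : k = k' by apply: val_inj.
    by move: hne; rewrite E eqxx.
transitivity (\sum_k \prod_j W k k j (x j) (y j)).
  apply: eq_bigr => k _; rewrite (bigD1 k) //= [X in _ + X = _]big1 ?addr0 // => k' hk'.
  by rewrite W0 // eq_sym.
pose dl (j : 'I_n) : R := (x j == y j)%:R.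
pose el (j : 'I_n) : R := (nat_of_ord (x j) == 0%N)%:R * (nat_of_ord (y j) == 0%N)%:R.
have FV : forall k j : 'I_n, W k k j (x j) (y j) = if (j < k)%N then dl j
    else if (k < j)%N then el j else if nat_of_ord k == 0%N then dl j else dl j - el j.
  move=> k j; rewrite /W; case: (ltngtP j k) => hjk.
  - by rewrite !(selE_lt hjk) (N1 (hpos j)).
  - by rewrite !(selE_gt hjk) (N4 (hsum j)).
  - have E : j = k by apply: val_inj.
    subst j; rewrite !selE_eq /V; case: eqP => _.
      by rewrite hU mxE.
    by rewrite (N3 (hU k) (h1 k) (hsum k)).
pose t (s : nat) : R := if s == 0%N then 0 else \prod_(j : 'I_n) (if (j < s)%N then dl j else el j).
have TC : forall k : 'I_n, \prod_j W k k j (x j) (y j) = t k.+1 - t k.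
  move=> k; under eq_bigr => j _ do rewrite FV.
  rewrite /t /=; case: eqP => hk0.
    rewrite subr0; apply: eq_bigr => j _; rewrite hk0.
    by case: (nat_of_ord j).
  rewrite (bigD1 k) //= [X in _ = X - _](bigD1 k) //= [X in _ = _ - X](bigD1 k) //=.
  rewrite ltnn ltnSn.
  set R0 := \prod_(j | j != k) _.
  set R1 := \prod_(j | j != k) _.
  set R2 := \prod_(j | j != k) _.
  have e1 : R0 = R1.
    apply: eq_bigr => j hj; case: (ltngtP j k) => h.
    - by rewrite ltnS ltnW.
    - by rewrite ltnS leqNgt h.
    - have E : j = k by apply: val_inj.
      by move: hj; rewrite E eqxx.
  have e2 : R0 = R2.
    apply: eq_bigr => j hj; case: (ltngtP j k) => h.
    - by [].
    - by [].
    - have E : j = k by apply: val_inj.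
      by move: hj; rewrite E eqxx.
  by rewrite -e1 -e2 mulrBl.
have n0 : n != 0%N.
  apply/eqP => n0; move: hp; subst n.
  by rewrite big_ord0 => /esym/eqP; rewrite oner_eq0.
under eq_bigr => k _ do rewrite TC.
rewrite -(big_mkord xpredT (fun k => t k.+1 - t k)) telescope_sumr // /t eqxx subr0.
rewrite (negbTE n0).
under eq_bigr => j _ do rewrite ltn_ord.
rewrite /idX /dl; case: (boolP [forall j, x j == y j]) => h.
  have -> : x = y by apply/ffunP => j; exact/eqP/(forallP h j).
  by rewrite eqxx big1 // => j _; rewrite eqxx.
move/forallPn: h => [j hj].
rewrite (bigD1 j) //= (negbTE hj) mul0r.
have -> : (x == y) = false by apply: (contraNF _ hj) => /eqP ->.
by [].
Qed.
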